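(* Let $G$ be a finite simple graph and let $t\le 0$ be an integer. Then $G$ has a unique maximal D-chain of order $t$. More precisely, if $L\colon G_0\ge G_1\ge\cdots\ge G_k$ and $L'\colon G'_0\ge G'_1\ge\cdots\ge G'_k$ are two D-chains of order $t$ of $G$, both of the maximum possible length $k$, then the chain $G_0\cup G'_0\ge G_1\cup G'_1\ge\cdots\ge G_k\cup G'_k$ (where $G_i\cup G'_i$ denotes the subgraph of $G$ induced by $V(G_i)\cup V(G'_i)$) is again a D-chain of order $t$ of $G$ of length $k$.
   Context: All graphs are finite, without loops or multiple edges. For graphs $H,G$ write $H\le G$ if $H$ is a subgraph of $G$, and $H<G$ if $H\le G$ and $H\ne G$. Let $t$ be an integer. A D-chain of order $t$ of $G$ is a chain $L\colon G_0\ge G_1\ge\cdots\ge G_k$ of nonempty subgraphs of $G$ with $G_0=G$, where $G_i$ is a vertex-induced subgraph of $G_{i-1}$ for $1\le i\le k$, such that for every $0\le i\le k$, every vertex $v$ of $G_i$ has at least $i$ neighbors in $G_j$, where $j=\max\{0,i+t\}$. The number $k$ is the length $|L|$ of the chain. A D-chain $L\colon G_0\ge\cdots\ge G_k$ of order $t$ is maximal if (i) there is no D-chain of order $t$ of $G$ of length greater than $k$, and (ii) there is no D-chain $L'\colon G'_0\ge G'_1\ge\cdots\ge G'_k$ of order $t$ of $G$ such that $G_i<G'_i$ for some $1\le i\le k$. (For $t\le 0$, the one-term chain $G_0=G$ is a D-chain of order $t$, so D-chains exist.) *)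

(* Defs.v *)
From HB Require Import structures.
From mathcomp Require Import all_boot all_order all_algebra.
Set Implicit Arguments. Unset Strict Implicit. Unset Printing Implicit Defensive.
Import Order.TTheory GRing.Theory Num.Theory.

(* A vertex-induced subgraph of G is identified with
   its vertex set A : {set T}.  A chain G_0 >= ... >= G_k of subgraphs, each
   vertex-induced in the previous one, with G_0 = G, consists of vertex-induced
   subgraphs of G, so it is represented by V : nat -> {set T} (only the values
   at 0..k matter). *)

Definition simple_graph (T : finType) (e : rel T) : Prop :=
  symmetric e /\ irreflexive e.

Definition deg_in (T : finType) (e : rel T) (A : {set T}) (v : T) : nat :=
  #|[set u in A | e v u]|.

Definition dindex (t : int) (i : nat) : nat :=
  `|Num.max 0%R (i%:Z + t)%R|%N.

Definition dchain (T : finType) (e : rel T) (t : int) (k : nat)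
    (V : nat -> {set T}) : Prop :=
  [/\ V 0 = [set: T],
      (forall i, i < k -> V i.+1 \subset V i),
      (forall i, i <= k -> V i != set0) &
      (forall i, i <= k -> forall v, v \in V i -> i <= deg_in e (V (dindex t i)) v)].

Definition max_dchain (T : finType) (e : rel T) (t : int) (k : nat)
    (V : nat -> {set T}) : Prop :=
  [/\ dchain e t k V,
      (forall k' V', dchain e t k' V' -> k' <= k) &
      ~ (exists V', dchain e t k V' /\
            exists i, [/\ 1 <= i, i <= k & V i \proper V' i])].

(* Main.v *)
Require Import Defs.
From mathcomp Require Import all_boot all_order all_algebra.
From Stdlib Require Import Classical.
Import Order.TTheory GRing.Theory Num.Theory.

Lemma union_dchain {T : finType} {e : rel T} {t : int} {k} {V V' : nat -> {set T}} :
  dchain e t k V -> dchain e t k V' -> dchain e t k (fun i => V i :|: V' i).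
Proof.
case=> [V0 Vs Vn Vd] [V'0 V's V'n V'd]; split.
- by rewrite V0 V'0 setUid.
- by move=> i ik; apply: setUSS; [apply: Vs | apply: V's].
- by move=> i ik; rewrite setU_eq0 negb_and Vn.
- move=> i ik v; rewrite in_setU => /orP[] vin.
  + apply: leq_trans (Vd i ik v vin) _; apply: subset_leq_card.
    by apply/subsetP=> u; rewrite !inE => /andP[-> ->].
  + apply: leq_trans (V'd i ik v vin) _; apply: subset_leq_card.
    by apply/subsetP=> u; rewrite !inE => /andP[-> ->]; rewrite orbT.
Qed.

Lemma exists_max (P : nat -> Prop) B :
  (exists n, P n) -> (forall n, P n -> n <= B) ->
  exists n, P n /\ forall m, P m -> m <= n.
Proof.
elim: B => [|B IH] [n0 Pn0] HB.
  exists n0; split=> // m Pm; by rewrite (leq_trans (HB m Pm)).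
destruct (classic (P B.+1)) as [PB|NPB].
  by exists B.+1; split.
apply: IH; first by exists n0.
move=> n Pn; have := HB n Pn; rewrite leq_eqVlt => /orP[/eqP E|//].
by rewrite E in Pn.
Qed.

Lemma dchain_len {T : finType} {e : rel T} {t : int} {k V} :
  dchain e t k V -> k <= #|T|.
Proof.
case=> _ _ Vn Vd; have /set0Pn [v vin] := Vn k (leqnn k).
exact: leq_trans (Vd k (leqnn k) v vin) (max_card _).
Qed.

Definition S {T : finType} k (W : nat -> {set T}) := \sum_(i < k.+1) #|W i|.

Lemma S_bound {T : finType} k (W : nat -> {set T}) : S k W <= k.+1 * #|T|.
Proof.
rewrite /S; apply: (@leq_trans (\sum_(i < k.+1) #|T|)).
  by apply: leq_sum => i _; apply: max_card.
by rewrite sum_nat_const card_ord.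
Qed.

Lemma S_strict {T : finType} k (W U : nat -> {set T}) i0 :
  (forall i, i <= k -> W i \subset U i) -> i0 <= k -> W i0 \proper U i0 ->
  S k W < S k U.
Proof.
move=> sub ik pr; rewrite /S (bigD1 (Ordinal (ik : i0 < k.+1))) //=.
rewrite [X in _ < X](bigD1 (Ordinal (ik : i0 < k.+1))) //=.
rewrite -addSn; apply: leq_add; first exact: proper_card.
apply: leq_sum => i _; apply: subset_leq_card; apply: sub.
by rewrite -ltnS.
Qed.

Theorem propositionC1 (T : finType) (e : rel T) (t : int) :
  simple_graph e -> (t <= 0)%R -> 0 < #|T| ->
  (* the union chain of two maximum-length D-chains is a D-chain *)
  (forall k (V V' : nat -> {set T}),
      dchain e t k V -> dchain e t k V' ->
      (forall k'' W, dchain e t k'' W -> k'' <= k) ->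
      dchain e t k (fun i => V i :|: V' i)) /\
  (* hence G has a unique maximal D-chain of order t *)
  (exists k (V : nat -> {set T}), max_dchain e t k V /\
      forall k' V', max_dchain e t k' V' ->
        k' = k /\ forall i, i <= k -> V' i = V i).
Proof.
move=> _ _ T0; split.
  by move=> k V V' H1 H2 _; apply: union_dchain.
have d0 : dchain e t 0 (fun _ => [set: T]).
  split=> //.
  - move=> i; rewrite leqn0 => _; apply/set0Pn.
    by case/card_gt0P: T0 => x _; exists x; rewrite inE.
  - by move=> i; rewrite leqn0 => /eqP -> v _.
have [k [[W0 HW0] kmax]] := exists_max (fun k => exists W, dchain e t k W) #|T|
   (ex_intro _ 0 (ex_intro _ _ d0)) (fun n '(ex_intro W H) => dchain_len H).
have [s [[V [HV HS]] smax]] := exists_max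
   (fun s => exists V, dchain e t k V /\ S k V = s) (k.+1 * #|T|)
   (ex_intro _ _ (ex_intro _ W0 (conj HW0 erefl)))
   (fun n '(ex_intro W (conj _ H)) => eq_ind _ (fun m => m <= k.+1 * #|T|) (S_bound k W) _ H).
have kmax' : forall k' W, dchain e t k' W -> k' <= k.
  by move=> k' W H; apply: kmax; exists W.
have noproper : forall V', dchain e t k V' -> forall i, i <= k ->
    ~ (V i \proper (V i :|: V' i)).
  move=> V' H' i ik pr.
  have U := union_dchain HV H'.
  have := smax _ (ex_intro _ _ (conj U erefl)).
  rewrite -HS leqNgt (@S_strict T k V (fun i => V i :|: V' i) i _ ik pr) //.
  by move=> j _; apply: subsetUl.
have maxV : max_dchain e t k V.
  split=> //; case=> V' [H' [i [i1 ik pr]]].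
  apply: (noproper V' H' i ik).
  apply: (proper_sub_trans pr); exact: subsetUr.
exists k, V; split=> // k' V' [H' k'max nV'].
have kk : k' = k by apply/eqP; rewrite eqn_leq (kmax' _ _ H') (k'max _ _ HV).
subst k'; split=> // i ik.
have sub : forall j, j <= k -> V' j \subset V j.
  move=> j jk; have := noproper V' H' j jk.
  rewrite properEneq subsetUl andbT => /negP; rewrite negbK => /eqP E.
  by rewrite E subsetUr.
apply/eqP; rewrite eqEsubset sub //=.
case: i ik => [|i] ik.
  by case: HV => -> _ _ _; case: H' => -> _ _ _.
apply/negPn/negP => ns; apply: nV'; exists V; split=> //.
exists i.+1; split=> //; rewrite properEneq sub // andbT.
by apply/negP => /eqP E; rewrite E subxx in ns.
Qed.
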